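(* Let $r$ be a positive integer, $A=A_r$, and let $M$ be the $\aleph_1$-separable group (right $A$-module) constructed as in the context, with $A$ regarded as a subring of $\operatorname{End}(M)$ via its action on $M$. If $A$ is algebraically closed in $\operatorname{End}(M)$, then for any positive integers $m$ and $k$, $M^m$ is isomorphic to $M^k$ if and only if $m\equiv k\pmod r$.
   Context: $A=A_r$ is the ring freely generated by $\rho_i,\sigma_i$ ($i=0,\dots,r$) subject to $\rho_j\sigma_i=\delta_{ij}$ and $\sum_{i=0}^r\sigma_i\rho_i=1$; it is free as an abelian group. Let $G$ be Corner's countable torsion-free abelian group: a right $A$-module whose endomorphism ring is $A$ (acting by right multiplication), with $\operatorname{Hom}(G,\mathbf{Z})=0$ and $G^\ell\not\cong G^n$ for $1\le\ell<n\le r$. Let $B\subseteq H$ be countable free right $A$-modules with $H/B\cong G$, $B=\bigcup_{n\in\omega}B_n$ an increasing chain with $B_0=0$ and $H/B_n$, $B_{n+1}/B_n$ free of rank $\omega$ for all $n$. Fix for each $n$ elements $b_{n,i}\in B_{n+1}$ ($i\in\omega$) such that $\{b_{n,i}+B_n\}$ is an $A$-basis of $B_{n+1}/B_n$ (so $\{b_{n,i}\}$ is a basis of $B$). Fix a stationary set $E\subseteq\omega_1$ of limit ordinals and a tree-like ladder system $\{\eta_\delta:\delta\in E\}$: each $\eta_\delta:\omega\to\delta$ is strictly increasing with range cofinal in $\delta$ and disjoint from $E$, and $\eta_\delta(n)=\eta_\gamma(m)$ implies $m=n$ and $\eta_\delta(l)=\eta_\gamma(l)$ for all $l<n$. Define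 right $A$-modules $M_\beta$ ($\beta<\omega_1$) inductively: $M_0=0$; $M_\beta=\bigcup_{\alpha<\beta}M_\alpha$ for limit $\beta$; if $\alpha\notin E$, $M_{\alpha+1}=M_\alpha\oplus\bigoplus_{i\in\omega}x_{\alpha,i}A$ with new free generators $x_{\alpha,i}$; if $\delta\in E$, let $\iota_\delta:B\to M_\delta$ be the $A$-linear map with $b_{n,i}\mapsto x_{\eta_\delta(n),i}$ and let $M_{\delta+1}$ be the pushout of $\iota_\delta$ and the inclusion $B\hookrightarrow H$ (so $M_\delta\subseteq M_{\delta+1}$, there is an embedding $\theta_\delta:H\to M_{\delta+1}$ extending $\iota_\delta$, and $M_{\delta+1}/M_\delta\cong H/B$). Put $M=\bigcup_{\beta<\omega_1}M_\beta$. An abelian group is $\aleph_1$-separable if every countable subset lies in a countable free direct summand. $M^m$ is the direct sum of $m$ copies of $M$. A subring $A$ of a ring $R$ is algebraically closed in $R$ if every finite system of ring equations (polynomials in several noncommuting variables with coefficients from $A$) that has a solution in $R$ has a solution in $A$. *)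

(* Defs.v *)
From HB Require Import structures.
From mathcomp Require Import all_boot all_order all_algebra.
From Stdlib Require Lists.List.
Set Implicit Arguments. Unset Strict Implicit. Unset Printing Implicit Defensive.
Import Order.TTheory GRing.Theory.
Local Open Scope ring_scope.

(* The ring A_r: freely generated by rho_i, sigma_i (i = 0..r) subject *)
(* to rho_j sigma_i = delta_ij and sum_i sigma_i rho_i = 1, expressed   *)
(* by its universal property.                                          *)
Definition Ar_relations (S : nzRingType) (r : nat) (rho sigma : 'I_r.+1 -> S) :=
  (forall i j : 'I_r.+1, rho j * sigma i = (i == j)%:R) /\
  \sum_(i < r.+1) sigma i * rho i = 1.

Definition is_Ar (A : nzRingType) (r : nat) (rho sigma : 'I_r.+1 -> A) :=
  Ar_relations rho sigma /\
  forall (S : nzRingType) (rho' sigma' : 'I_r.+1 -> S),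
    Ar_relations rho' sigma' ->
    (exists f : {rmorphism A -> S},
        forall i, f (rho i) = rho' i /\ f (sigma i) = sigma' i) /\
    (forall f g : {rmorphism A -> S},
        (forall i, f (rho i) = g (rho i) /\ f (sigma i) = g (sigma i)) ->
        forall a, f a = g a).

(* Generalities. Right A-modules are left A^c-modules: the right       *)
(* product m.a is written  a *: m.                                     *)
Definition countable_type (T : Type) := exists f : T -> nat, injective f.

Definition additive_map (U V : zmodType) (f : U -> V) :=
  forall x y, f (x + y) = f x + f y.

Definition group_iso (U V : zmodType) :=
  exists f : U -> V, additive_map f /\ bijective f.

Definition power (V : zmodType) (n : nat) : zmodType := {ffun 'I_n -> V}.

Section Modules.
Variable A : nzRingType.

Definition Alinear (U V : lmodType A^c) (f : U -> V) :=
  additive_map f /\ forall (a : A^c) u, f (a *: u) = a *: f u.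

Definition submod (V : lmodType A^c) (P : V -> Prop) :=
  P 0 /\ (forall x y, P x -> P y -> P (x + y)) /\
  (forall (a : A^c) x, P x -> P (a *: x)).

(* v is an A-basis of the quotient P/Q  (Q a submodule of P);
   in particular  P/Q  is free of rank omega *)
Definition qbasis (V : lmodType A^c) (P Q : V -> Prop) (v : nat -> V) :=
  (forall i, P (v i)) /\
  (forall y, P y -> exists (N : nat) (c : nat -> A^c),
                     Q (y - \sum_(i < N) c i *: v i)) /\
  (forall (N : nat) (c : nat -> A^c),
     Q (\sum_(i < N) c i *: v i) -> forall i, (i < N)%N -> c i = 0).

Definition zero_sub (V : lmodType A^c) : V -> Prop := fun v => v = 0.
End Modules.

Definition corner_group (A : nzRingType) (r : nat) (G : lmodType A^c) :=
  countable_type G /\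
  (forall (g : G) n, g *+ n.+1 = 0 -> g = 0) /\
  (* End(G) = A acting by right multiplication *)
  (forall f : G -> G, additive_map f ->
     exists a : A^c, (forall g, f g = a *: g) /\
       forall b : A^c, (forall g, f g = b *: g) -> b = a) /\
  (forall f : G -> int, additive_map f -> forall g, f g = 0) /\
  (forall l n, (1 <= l)%N -> (l < n)%N -> (n <= r)%N ->
     ~ group_iso (power G l) (power G n)).

(* omega_1 : any well-ordered uncountable type whose proper initial    *)
(* segments are countable (all such are isomorphic to omega_1).       *)
Section Omega1.
Context {d : Order.disp_t} {O : orderType d}.
Local Open Scope order_scope.

Definition is_omega1 :=
  well_founded (fun a b : O => a < b) /\
  ~ countable_type O /\
  forall a : O, exists f : O -> nat,
      forall b c, b < a -> c < a -> f b = f c -> b = c.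

Definition is_zero_ord (a : O) := forall b, a <= b.
Definition succ_of (a b : O) := a < b /\ forall c, a < c -> b <= c.
Definition limit_ord (a : O) :=
  (exists b, b < a) /\ forall b, b < a -> exists c, b < c /\ c < a.

Definition club (C : O -> Prop) :=
  (forall a, exists b, a < b /\ C b) /\
  (forall a, limit_ord a ->
     (forall b, b < a -> exists c, b < c /\ c < a /\ C c) -> C a).

Definition stationary (E : O -> Prop) :=
  forall C, club C -> exists a, C a /\ E a.

Definition tree_ladder (E : O -> Prop) (eta : O -> nat -> O) :=
  forall a, E a ->
    (forall n m, (n < m)%N -> eta a n < eta a m) /\
    (forall n, eta a n < a) /\
    (forall b, b < a -> exists n, b <= eta a n) /\
    (forall n, ~ E (eta a n)) /\
    (forall c n m, E c -> eta a n = eta c m ->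
       m = n /\ forall l, (l < n)%N -> eta a l = eta c l).
End Omega1.

Definition BH_data (A : nzRingType) (G H : lmodType A^c)
  (B : H -> Prop) (Bn : nat -> H -> Prop) (b : nat -> nat -> H) :=
  countable_type H /\
  submod B /\
  (exists w : nat -> H, qbasis B (@zero_sub _ H) w) /\   (* B free *)
  (exists w : nat -> H, qbasis (fun _ => True) (@zero_sub _ H) w) /\ (* H free *)
  (exists q : H -> G, Alinear q /\ (forall g, exists h, q h = g) /\
                      forall h, q h = 0 <-> B h) /\
  (forall n, submod (Bn n)) /\
  (forall n h, Bn n h -> Bn n.+1 h) /\
  (forall h, B h <-> exists n, Bn n h) /\
  (forall h, Bn 0%N h <-> h = 0) /\
  (forall n, exists v : nat -> H, qbasis (fun _ => True) (Bn n) v) /\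
  (forall n, qbasis (Bn n.+1) (Bn n) (b n)).

(* The transfinite construction of M, characterized (up to isomorphism)
   by a filtration M_beta, the free generators x_{alpha,i}, and the
   embeddings theta_delta : H -> M_{delta+1}, where M_{delta+1} is the
   pushout of iota_delta and B -> H. *)
Definition M_construction (A : nzRingType) {d : Order.disp_t} {O : orderType d}
  (H : lmodType A^c) (B : H -> Prop) (b : nat -> nat -> H)
  (E : O -> Prop) (eta : O -> nat -> O)
  (M : lmodType A^c) (Mb : O -> M -> Prop) (x : O -> nat -> M)
  (theta : O -> H -> M) :=
  (forall a, submod (Mb a)) /\
  (forall a c m, (a <= c)%O -> Mb a m -> Mb c m) /\
  (forall a, is_zero_ord a -> forall m, Mb a m <-> m = 0) /\
  (forall a, limit_ord a -> forall m, Mb a m <-> exists c, (c < a)%O /\ Mb c m) /\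
  (forall a c, succ_of a c -> ~ E a -> qbasis (Mb c) (Mb a) (x a)) /\
  (forall a c, succ_of a c -> E a ->
     Alinear (theta a) /\
     (forall n i, theta a (b n i) = x (eta a n) i) /\
     (forall h, Mb c (theta a h)) /\
     (forall m, Mb c m -> exists m0 h, Mb a m0 /\ m = m0 + theta a h) /\
     (forall m0 h, Mb a m0 -> m0 + theta a h = 0 -> B h)) /\
  (forall m, exists a, Mb a m).

(* Algebraic closedness of A in End(M).  End(M) is the ring of additive *)
(* endomorphisms, with endomorphisms acting on the right (product f.g =  *)
(* first f then g), so that a |-> (m |-> m.a) is a ring embedding.       *)
Inductive term (A : Type) :=
| TVar of nat
| TConst of A
| TAdd of term A & term A
| TNeg of term A
| TMul of term A & term A.

Arguments TVar {A}.

Fixpoint evalA (A : nzRingType) (s : nat -> A) (t : term A) : A :=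
  match t with
  | TVar n => s n
  | TConst a => a
  | TAdd t1 t2 => evalA s t1 + evalA s t2
  | TNeg t1 => - evalA s t1
  | TMul t1 t2 => evalA s t1 * evalA s t2
  end.

Fixpoint evalEnd (A : nzRingType) (M : lmodType A^c) (s : nat -> M -> M)
    (t : term A) : M -> M :=
  match t with
  | TVar n => s n
  | TConst a => fun m => (a : A^c) *: m
  | TAdd t1 t2 => fun m => evalEnd s t1 m + evalEnd s t2 m
  | TNeg t1 => fun m => - evalEnd s t1 m
  | TMul t1 t2 => fun m => evalEnd s t2 (evalEnd s t1 m)
  end.

Definition alg_closed_in_End (A : nzRingType) (M : lmodType A^c) :=
  forall sys : seq (term A),
    (exists s : nat -> M -> M, (forall n, additive_map (s n)) /\
        forall t, Stdlib.Lists.List.In t sys -> forall m, evalEnd s t m = 0) ->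
    exists s : nat -> A, forall t, Stdlib.Lists.List.In t sys -> evalA s t = 0.

(* Main.v *)
Require Import Defs.
From HB Require Import structures.
From mathcomp Require Import all_boot all_order all_algebra zify.
From Stdlib Require List.
Import Order.TTheory GRing.Theory.
Local Open Scope ring_scope.
Set Implicit Arguments. Unset Strict Implicit.


Definition mequiv (A : nzRingType) (m k : nat) :=
  exists (P : 'M[A]_(m, k)) (Q : 'M[A]_(k, m)), P *m Q = 1%:M /\ Q *m P = 1%:M.

Lemma mequiv_refl A m : @mequiv A m m.
Proof. by exists 1%:M, 1%:M; rewrite mul1mx. Qed.

Lemma mequiv_sym A m k : @mequiv A m k -> mequiv A k m.
Proof. by case=> P [Q [h1 h2]]; exists Q, P. Qed.

Lemma mequiv_trans A m k l : @mequiv A m k -> mequiv A k l -> mequiv A m l.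
Proof.
case=> P [Q [h1 h2]] [P' [Q' [h3 h4]]]; exists (P *m P'), (Q' *m Q); split.
  by rewrite mulmxA -(mulmxA P) h3 mulmx1 h1.
by rewrite mulmxA -(mulmxA Q') h2 mulmx1 h4.
Qed.

Lemma mequiv_add A a b c e : @mequiv A a b -> mequiv A c e -> mequiv A (a + c) (b + e).
Proof.
case=> P [Q [h1 h2]] [P' [Q' [h3 h4]]].
exists (block_mx P 0 0 P'), (block_mx Q 0 0 Q'); split.
  by rewrite mulmx_block !mulmx0 !mul0mx !addr0 !add0r h1 h3 scalar_mx_block.
by rewrite mulmx_block !mulmx0 !mul0mx !addr0 !add0r h2 h4 scalar_mx_block.
Qed.

Lemma mequiv_1r (A : nzRingType) r (rho sigma : 'I_r.+1 -> A) : Ar_relations rho sigma -> mequiv A 1 r.+1.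
Proof.
case=> h1 h2.
exists (\row_i sigma i), (\col_i rho i); split.
  apply/matrixP=> i j; rewrite !ord1 !mxE -h2; apply: eq_bigr => l _; by rewrite !mxE.
apply/matrixP=> i j; rewrite !mxE big_ord1 !mxE h1 eq_sym //.
Qed.

Lemma mequiv_step (A : nzRingType) r (rho sigma : 'I_r.+1 -> A) m :
  Ar_relations rho sigma -> (0 < m)%N -> mequiv A m (m + r).
Proof.
move=> hA hm.
have -> : (m + r = (m - 1) + r.+1)%N by lia.
rewrite -{1}(subnK hm).
exact: mequiv_add (mequiv_refl _ _) (mequiv_1r hA).
Qed.

Lemma mequiv_mul (A : nzRingType) r (rho sigma : 'I_r.+1 -> A) m n :
  Ar_relations rho sigma -> (0 < m)%N -> mequiv A m (m + r * n).
Proof.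
move=> hA hm; elim: n => [|n IH]; first by rewrite muln0 addn0; apply: mequiv_refl.
apply: mequiv_trans IH _; have -> : (m + r * n.+1 = (m + r * n) + r)%N by lia.
by apply: mequiv_step hA _; rewrite ltn_addr.
Qed.

Lemma mequiv_mod (A : nzRingType) r (rho sigma : 'I_r.+1 -> A) m k :
  Ar_relations rho sigma -> (0 < m)%N -> (0 < k)%N -> m = k %[mod r] -> mequiv A m k.
Proof.
move=> hA.
wlog le_mk : m k / (m <= k)%N.
  move=> W hm hk e; case: (leqP m k) => h; first exact: W.
  by apply: mequiv_sym; apply: W => //; apply: ltnW.
move=> hm hk e.
have /dvdnP [n hn] : (r %| k - m)%N by rewrite -eqn_mod_dvd // e.
have -> : k = (m + r * n)%N by rewrite mulnC -hn subnKC.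
exact: mequiv_mul hA hm.
Qed.

Definition mact (A : nzRingType) (V : lmodType A^c) m k (P : 'M[A]_(m, k))
  (v : power V m) : power V k := [ffun j => \sum_i (P i j : A^c) *: v i].

Lemma mact_comp (A : nzRingType) (V : lmodType A^c) m k l (P : 'M[A]_(m, k))
  (Q : 'M[A]_(k, l)) (v : power V m) : mact Q (mact P v) = mact (P *m Q) v.
Proof.
apply/ffunP => j; rewrite !ffunE.
under eq_bigr do rewrite ffunE scaler_sumr.
rewrite exchange_big /=; apply: eq_bigr => i _.
rewrite mxE scaler_suml; apply: eq_bigr => h _.
by rewrite scalerA.
Qed.

Lemma mact1 (A : nzRingType) (V : lmodType A^c) m (v : power V m) : mact (1%:M : 'M[A]_m) v = v.
Proof.
apply/ffunP => j; rewrite ffunE (bigD1 j) //= big1 ?addr0.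
  by rewrite mxE eqxx; exact: scale1r.
by move=> i hij; rewrite mxE (negbTE hij); exact: scale0r.
Qed.

Lemma mact_add (A : nzRingType) (V : lmodType A^c) m k (P : 'M[A]_(m, k)) :
  additive_map (mact (V := V) P).
Proof.
move=> u v; apply/ffunP => j; rewrite !ffunE -big_split /=.
by apply: eq_bigr => i _; rewrite !ffunE scalerDr.
Qed.

Lemma mequiv_iso (A : nzRingType) (V : lmodType A^c) m k :
  mequiv A m k -> group_iso (power V m) (power V k).
Proof.
case=> P [Q [h1 h2]]; exists (mact P); split; first exact: mact_add.
by exists (mact Q) => v; rewrite mact_comp ?h1 ?h2 mact1.
Qed.

Lemma add0_map (U V : zmodType) (f : U -> V) : additive_map f -> f 0 = 0.
Proof. move=> h; have := h 0 0; rewrite addr0 => e; apply: (addrI (f 0)); by rewrite addr0 -e. Qed.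

Lemma add_sum (U V : zmodType) (f : U -> V) (T0 : Type) (l : seq T0) (F : T0 -> U) :
  additive_map f -> f (\sum_(i <- l) F i) = \sum_(i <- l) f (F i).
Proof.
move=> h; elim: l => [|a l IH]; first by rewrite !big_nil (add0_map h).
by rewrite !big_cons h IH.
Qed.

Definition ev (V : zmodType) n (i : 'I_n) (x : V) : power V n :=
  [ffun l => if l == i then x else 0].

Lemma ev_add (V : zmodType) n (i : 'I_n) : additive_map (@ev V n i).
Proof. by move=> x y; apply/ffunP => l; rewrite !ffunE; case: eqP; rewrite ?addr0. Qed.

Lemma decomp (V : zmodType) n (v : power V n) : v = \sum_i ev i (v i).
Proof.
apply/ffunP => l; rewrite sum_ffunE (bigD1 l) //= big1 ?addr0 ?ffunE ?eqxx //.
by move=> i hi; rewrite ffunE eq_sym (negbTE hi).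
Qed.

Lemma In_mem (T : eqType) (x : T) s : List.In x s -> x \in s.
Proof. elim: s => //= a s IH [->|h]; rewrite inE ?eqxx // IH ?orbT //. Qed.

Fixpoint tsum (A : nzRingType) (l : seq nat) (F : nat -> term A) : term A :=
  match l with
  | nil => TConst (0 : A)
  | cons j l' => TAdd (F j) (tsum l' F)
  end.

Lemma evalA_tsum (A : nzRingType) (s : nat -> A) l F :
  evalA s (tsum l F) = \sum_(j <- l) evalA s (F j).
Proof. by elim: l => [|a l IH] /=; rewrite ?big_nil ?big_cons ?IH. Qed.

Lemma evalEnd_tsum (A : nzRingType) (M : lmodType A^c) (s : nat -> M -> M) l F x :
  evalEnd s (tsum l F) x = \sum_(j <- l) evalEnd s (F j) x.
Proof.
elim: l => [|a l IH] /=; rewrite ?big_nil ?big_cons ?IH //; exact: scale0r.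
Qed.

Lemma sum_iota (R : zmodType) n (F : nat -> R) :
  \sum_(j <- iota 0 n) F j = \sum_(j < n) F j.
Proof. by rewrite -(big_mkord xpredT) /index_iota subn0. Qed.

Definition Fn (M : zmodType) m k (f : power M m -> power M k) (i j : nat) (x : M) : M :=
  match (insub i : option 'I_m), (insub j : option 'I_k) with
  | Some i0, Some j0 => f (ev i0 x) j0
  | _, _ => 0
  end.

Lemma Fn_add (M : zmodType) m k (f : power M m -> power M k) i j :
  additive_map f -> additive_map (Fn f i j).
Proof.
move=> hf x y; rewrite /Fn; case: (insub i : option 'I_m) => [i0|];
  case: (insub j : option 'I_k) => [j0|]; rewrite ?addr0 //.
by rewrite ev_add hf ffunE.
Qed.

Lemma Fn_ord (M : zmodType) m k (f : power M m -> power M k) (i : 'I_m) (j : 'I_k) :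
  Fn f i j = fun x => f (ev i x) j.
Proof. by rewrite /Fn !valK. Qed.

Definition fvar (k i j : nat) := (i * k + j).*2%N.
Definition gvar (m j i : nat) := (j * m + i).*2.+1%N.

Definition sEnd (M : zmodType) m k (f : power M m -> power M k)
  (g : power M k -> power M m) (n : nat) : M -> M :=
  if odd n then Fn g (n./2 %/ m) (n./2 %% m) else Fn f (n./2 %/ k) (n./2 %% k).

Lemma sEnd_f (M : zmodType) m k f g (i : 'I_m) (j : 'I_k) :
  @sEnd M m k f g (fvar k i j) = fun x => f (ev i x) j.
Proof.
rewrite /sEnd /fvar odd_double doubleK.
have hk : (0 < k)%N by apply: leq_ltn_trans (ltn_ord j).
rewrite divnMDl // divn_small // addn0 modnMDl modn_small //.
exact: Fn_ord.
Qed.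

Lemma sEnd_g (M : zmodType) m k f g (i : 'I_m) (j : 'I_k) :
  @sEnd M m k f g (gvar m j i) = fun x => g (ev j x) i.
Proof.
rewrite /sEnd /gvar /= odd_double /= uphalf_double.
have hm : (0 < m)%N by apply: leq_ltn_trans (ltn_ord i).
rewrite divnMDl // divn_small // addn0 modnMDl modn_small //.
exact: Fn_ord.
Qed.

Lemma mem_In (T : eqType) (x : T) s : x \in s -> List.In x s.
Proof. elim: s => //= a s IH; rewrite inE => /orP [/eqP ->|h]; [by left|right; exact: IH]. Qed.

Lemma In_iota x n : (x < n)%N -> List.In x (iota 0 n).
Proof. by move=> h; apply: mem_In; rewrite mem_iota. Qed.

Lemma iota_lt x n : List.In x (iota 0 n) -> (x < n)%N.
Proof. by move/In_mem; rewrite mem_iota. Qed.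

Definition eqA (A : nzRingType) m k (i i' : nat) : term A :=
  TAdd (tsum (iota 0 k) (fun j => TMul (TVar (fvar k i j)) (TVar (gvar m j i'))))
       (TNeg (TConst (if i == i' then (1 : A) else 0))).
Definition eqB (A : nzRingType) m k (j j' : nat) : term A :=
  TAdd (tsum (iota 0 m) (fun i => TMul (TVar (gvar m j i)) (TVar (fvar k i j'))))
       (TNeg (TConst (if j == j' then (1 : A) else 0))).
Definition sys (A : nzRingType) m k : seq (term A) :=
  List.app (List.flat_map (fun i => map (@eqA A m k i) (iota 0 m)) (iota 0 m))
           (List.flat_map (fun j => map (@eqB A m k j) (iota 0 k)) (iota 0 k)).


Lemma iso_mequiv (A : nzRingType) (M : lmodType A^c) m k :
  alg_closed_in_End M -> group_iso (power M m) (power M k) -> mequiv A m k.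
Proof.
move=> hcl [f [hf [g fg gf]]].
have hg : additive_map g.
  by move=> u v; apply: (can_inj fg); rewrite hf !gf.
have c1 : forall (i i' : 'I_m) x, \sum_(j < k) g (ev j (f (ev i x) j)) i' = ev i x i'.
  move=> i i' x; rewrite -sum_ffunE -(add_sum _ _ hg) -decomp fg //.
have c2 : forall (j j' : 'I_k) y, \sum_(i < m) f (ev i (g (ev j y) i)) j' = ev j y j'.
  move=> j j' y; rewrite -sum_ffunE -(add_sum _ _ hf) -decomp gf //.
case: (hcl (sys A m k)) => [|s hs].
  exists (sEnd f g); split.
    by move=> n; rewrite /sEnd; case: odd; apply: Fn_add.
  move=> t /List.in_app_iff [] /List.in_flat_map [i [/iota_lt hi /List.in_map_iff [i' [<- /iota_lt hi']]]] x /=.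
    rewrite evalEnd_tsum sum_iota.
    have e1 := c1 (Ordinal hi) (Ordinal hi') x.
    rewrite (eq_bigr (fun j : 'I_k => g (ev j (f (ev (Ordinal hi) x) j)) (Ordinal hi'))); last first.
      move=> j _ /=.
      rewrite (_ : sEnd f g (fvar k i j) = fun x => f (ev (Ordinal hi) x) j); last exact: (sEnd_f f g (Ordinal hi) j).
      by rewrite (_ : sEnd f g (gvar m j i') = fun x => g (ev j x) (Ordinal hi')); last exact: (sEnd_g f g (Ordinal hi') j).
    rewrite e1 ffunE.
    have -> : (Ordinal hi' == Ordinal hi) = (i == i') by rewrite eq_sym.
    case: (i == i'); [rewrite scale1r | rewrite scale0r]; exact: subrr.
  move: i i' hi hi' x => j j' hj hj' y.
  rewrite evalEnd_tsum sum_iota.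
  have e2 := c2 (Ordinal hj) (Ordinal hj') y.
  rewrite (eq_bigr (fun i : 'I_m => f (ev i (g (ev (Ordinal hj) y) i)) (Ordinal hj'))); last first.
    move=> i _ /=.
    rewrite (_ : sEnd f g (gvar m j i) = fun x => g (ev (Ordinal hj) x) i); last exact: (sEnd_g f g i (Ordinal hj)).
    by rewrite (_ : sEnd f g (fvar k i j') = fun x => f (ev i x) (Ordinal hj')); last exact: (sEnd_f f g i (Ordinal hj')).
  rewrite e2 ffunE.
  have -> : (Ordinal hj' == Ordinal hj) = (j == j') by rewrite eq_sym.
  case: (j == j'); [rewrite scale1r | rewrite scale0r]; exact: subrr.
exists (\matrix_(i < m, j < k) s (fvar k i j)), (\matrix_(j < k, i < m) s (gvar m j i)).
split; apply/matrixP => a a'; rewrite !mxE.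
  have h : List.In (eqA A m k a a') (sys A m k).
    rewrite /sys; apply: List.in_or_app; left; apply/List.in_flat_map; exists (nat_of_ord a); split; first exact: In_iota.
    by apply/List.in_map_iff; exists (nat_of_ord a'); split => //; exact: In_iota.
  move/hs: h => /= /eqP; rewrite evalA_tsum sum_iota subr_eq0 => /eqP h2.
  rewrite (eq_bigr (fun j : 'I_k => s (fvar k a j) * s (gvar m j a'))); last by move=> j _; rewrite !mxE.
  by rewrite h2 -val_eqE; case: (_ == _).
have h : List.In (eqB A m k a a') (sys A m k).
  rewrite /sys; apply: List.in_or_app; right; apply/List.in_flat_map; exists (nat_of_ord a); split; first exact: In_iota.
  by apply/List.in_map_iff; exists (nat_of_ord a'); split => //; exact: In_iota.
move/hs: h => /= /eqP; rewrite evalA_tsum sum_iota subr_eq0 => /eqP h2.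
rewrite (eq_bigr (fun j : 'I_m => s (gvar m a j) * s (fvar k j a'))); last by move=> j _; rewrite !mxE.
by rewrite h2 -val_eqE; case: (_ == _).
Qed.

Lemma mod_rep r m : (0 < r)%N -> (0 < m)%N ->
  let m' := ((m - 1) %% r).+1 in [/\ (0 < m')%N, (m' <= r)%N & m' = m %[mod r]].
Proof.
move=> hr hm m'; split => //; first by rewrite /m' ltn_pmod.
by rewrite /m' -addn1 modnDml addn1 subn1 prednK.
Qed.

Theorem proposition3p1
  (r : nat) (hr : (0 < r)%N)
  (A : nzRingType) (rho sigma : 'I_r.+1 -> A) (hA : is_Ar rho sigma)
  (G : lmodType A^c) (hG : corner_group r G)
  (H : lmodType A^c) (B : H -> Prop) (Bn : nat -> H -> Prop)
  (b : nat -> nat -> H) (hBH : BH_data G B Bn b)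
  (d : Order.disp_t) (O : orderType d) (hO : @is_omega1 d O)
  (E : O -> Prop) (hElim : forall a, E a -> limit_ord a)
  (hEstat : stationary E)
  (eta : O -> nat -> O) (heta : tree_ladder E eta)
  (M : lmodType A^c) (Mb : O -> M -> Prop) (x : O -> nat -> M)
  (theta : O -> H -> M) (hM : M_construction B b E eta Mb x theta) :
  alg_closed_in_End M ->
  forall m k : nat, (0 < m)%N -> (0 < k)%N ->
    (group_iso (power M m) (power M k) <-> m = k %[mod r]).
Proof.
move=> hcl m k hm hk.
have hrel := hA.1.
have hGn := hG.2.2.2.2.
split; last first.
  by move=> e; apply: mequiv_iso; exact: (mequiv_mod hrel hm hk e).
move=> hiso; have e := iso_mequiv hcl hiso.
have [hm1 hm2 hm3] := mod_rep hr hm.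
have [hk1 hk2 hk3] := mod_rep hr hk.
set m' := ((m - 1) %% r).+1 in hm1 hm2 hm3.
set k' := ((k - 1) %% r).+1 in hk1 hk2 hk3.
have e' : mequiv A m' k'.
  apply: mequiv_trans (mequiv_mod hrel hm1 hm hm3) _.
  apply: mequiv_trans e _.
  exact: mequiv_mod hrel hk hk1 (esym hk3).
case: (ltngtP m' k') => h.
- by case: (hGn m' k' hm1 h hk2); apply: mequiv_iso.
- by case: (hGn k' m' hk1 h hm2); apply: mequiv_iso; apply: mequiv_sym.
- by rewrite -hm3 -hk3 h.
Qed.
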